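(* Let $a \ge 1$ and $1 \le k \le a$ be integers. There exist a finite directed graph $H$, vertices $p,q$ of $H$, an incoming arc $e_{in}$ ending at $p$ and an outgoing arc $e_{out}$ starting at $q$ (with their other endpoints outside $H$), such that every vertex of $H$ has in-degree plus out-degree at most $4$ when $e_{in}, e_{out}$ are counted, and for every nonnegative integer $t$ the following are equivalent: (1) $k \le t \le a$; (2) when $e_{in}$ and $e_{out}$ both receive label $t$, there is an assignment of nonnegative integer labels to the arcs of $H$ such that for every vertex $v$ of $H$ the sum of labels on arcs entering $v$ and the sum of labels on arcs leaving $v$ (including $e_{in}$ and $e_{out}$) are both equal to $a$, and every vertex of $H$ is connected to $p$ via arcs of $H$ with positive label (ignoring directions). *)

(* Defs.v *)
From mathcomp Require Import all_boot.
Set Implicit Arguments. Unset Strict Implicit. Unset Printing Implicit Defensive.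

Record digraph := Digraph {
  dvert : finType;
  darc : finType;
  dsrc : darc -> dvert;
  dtgt : darc -> dvert }.

Definition loopless (H : digraph) : Prop := forall e : darc H, dsrc e != dtgt e.

Definition indeg (H : digraph) (v : dvert H) : nat := #|[set e | dtgt e == v]|.
Definition outdeg (H : digraph) (v : dvert H) : nat := #|[set e | dsrc e == v]|.

(* degree bound with the external arcs e_in (ending at p) and e_out
   (starting at q) counted *)
Definition deg_le4 (H : digraph) (p q : dvert H) : Prop :=
  forall v : dvert H, (v == p) + indeg v + (outdeg v + (v == q)) <= 4.

Definition in_sum (H : digraph) (p : dvert H) (t : nat) (f : darc H -> nat)
  (v : dvert H) : nat := (if v == p then t else 0) + \sum_(e | dtgt e == v) f e.

Definition out_sum (H : digraph) (q : dvert H) (t : nat) (f : darc H -> nat)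
  (v : dvert H) : nat := (if v == q then t else 0) + \sum_(e | dsrc e == v) f e.

Definition pos_adj (H : digraph) (f : darc H -> nat) : rel (dvert H) :=
  fun x y => [exists e, (0 < f e) &&
     (((dsrc e == x) && (dtgt e == y)) || ((dsrc e == y) && (dtgt e == x)))].

Definition good_labelling (H : digraph) (p q : dvert H) (a t : nat)
  (f : darc H -> nat) : Prop :=
  (forall v, in_sum p t f v = a) /\ (forall v, out_sum q t f v = a) /\
  (forall v, connect (pos_adj f) v p).

(* Main.v *)
Require Import Defs.
From mathcomp Require Import all_boot zify.
Set Implicit Arguments. Unset Strict Implicit. Unset Printing Implicit Defensive.

Lemma cut_lemma (H : digraph) (p q : dvert H) a t (f : darc H -> nat) (S : {pred dvert H}) :
  (forall v, in_sum p t f v = a) -> (forall v, out_sum q t f v = a) ->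
  (p \in S) * t + \sum_(e | (dtgt e \in S) && (dsrc e \notin S)) f e =
  (q \in S) * t + \sum_(e | (dsrc e \in S) && (dtgt e \notin S)) f e.
Proof.
move=> Hin Hout.
have E : \sum_(v in S) in_sum p t f v = \sum_(v in S) out_sum q t f v.
  by apply: eq_bigr => v _; rewrite Hin Hout.
rewrite /in_sum /out_sum !big_split /= in E.
have Hpt : forall (x : dvert H) u, \sum_(v in S) (if v == x then u else 0) = (x \in S) * u.
  move=> x u; case: (boolP (x \in S)) => Hx.
  - rewrite (bigD1 x) //= eqxx big1 ?addn0 ?mul1n // => v /andP[_ /negbTE ->] //.
  - rewrite big1 ?mul0n // => v Hv; case: eqP => // Evx; by rewrite -Evx Hv in Hx.
rewrite !Hpt in E.
have Htg : \sum_(v in S) \sum_(e | dtgt e == v) f e = \sum_(e | dtgt e \in S) f e.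
  rewrite (partition_big (fun e => dtgt e) (mem S)) //=.
  apply: eq_bigr => v Hv; apply: eq_bigl => e.
  by case: eqP => [->|]; rewrite ?andbT ?andbF.
have Hsr : \sum_(v in S) \sum_(e | dsrc e == v) f e = \sum_(e | dsrc e \in S) f e.
  rewrite (partition_big (fun e => dsrc e) (mem S)) //=.
  apply: eq_bigr => v Hv; apply: eq_bigl => e.
  by case: eqP => [->|]; rewrite ?andbT ?andbF.
rewrite Htg Hsr (bigID (fun e => dsrc e \in S)) (bigID (fun e => dtgt e \in S) (fun e => dsrc e \in S)) /= in E.
have Hc : \sum_(e | (dtgt e \in S) && (dsrc e \in S)) f e = \sum_(e | (dsrc e \in S) && (dtgt e \in S)) f e.
  by apply: eq_bigl => e; rewrite andbC.
rewrite Hc in E; lia.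
Qed.

Definition R0 : 'I_6 := @Ordinal 6 0 isT.
Definition R1 : 'I_6 := @Ordinal 6 1 isT.
Definition R2 : 'I_6 := @Ordinal 6 2 isT.
Definition R3 : 'I_6 := @Ordinal 6 3 isT.
Definition R4 : 'I_6 := @Ordinal 6 4 isT.
Definition R5 : 'I_6 := @Ordinal 6 5 isT.
Definition K0 : 'I_10 := @Ordinal 10 0 isT.
Definition K1 : 'I_10 := @Ordinal 10 1 isT.
Definition K2 : 'I_10 := @Ordinal 10 2 isT.
Definition K3 : 'I_10 := @Ordinal 10 3 isT.
Definition K4 : 'I_10 := @Ordinal 10 4 isT.
Definition K5 : 'I_10 := @Ordinal 10 5 isT.
Definition K6 : 'I_10 := @Ordinal 10 6 isT.
Definition K7 : 'I_10 := @Ordinal 10 7 isT.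
Definition K8 : 'I_10 := @Ordinal 10 8 isT.
Definition K9 : 'I_10 := @Ordinal 10 9 isT.

Section G.
Variable n : nat.
Local Notation V := ('I_n.+1 * 'I_6)%type.
Local Notation A := ('I_n.+1 * 'I_10)%type.

Definition tgtf (e : A) : V :=
  let i := e.1 in
  match val e.2 with
  | 0 => (i, R1) | 1 => (i, R0) | 2 => (i, R2) | 3 => (i, R3) | 4 => (i, R2)
  | 5 => (i, R4) | 6 => (i, R5) | 7 => (i, R4) | 8 => (ordS i, R0) | _ => (i, R4) end.
Definition srcf (e : A) : V :=
  let i := e.1 in
  match val e.2 with
  | 0 => (i, R0) | 1 => (i, R1) | 2 => (i, R1) | 3 => (i, R2) | 4 => (i, R3)
  | 5 => (i, R3) | 6 => (i, R4) | 7 => (i, R5) | 8 => (i, R1) | _ => (ordS i, R5) end.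
Definition inl (v : V) : seq A :=
  let j := v.1 in
  match val v.2 with
  | 0 => [:: (j, K1); (ord_pred j, K8)] | 1 => [:: (j, K0)] | 2 => [:: (j, K2); (j, K4)]
  | 3 => [:: (j, K3)] | 4 => [:: (j, K5); (j, K7); (j, K9)] | _ => [:: (j, K6)] end.
Definition outl (v : V) : seq A :=
  let j := v.1 in
  match val v.2 with
  | 0 => [:: (j, K0)] | 1 => [:: (j, K1); (j, K2); (j, K8)] | 2 => [:: (j, K3)]
  | 3 => [:: (j, K4); (j, K5)] | 4 => [:: (j, K6)] | _ => [:: (j, K7); (ord_pred j, K9)] end.

Lemma ordE m (x y : 'I_m) : (x == y) = (val x == val y).
Proof. by []. Qed.

Lemma ordS_eq m (i j : 'I_m) : (ordS i == j) = (i == ord_pred j).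
Proof. by apply/eqP/eqP => [<-|->]; rewrite ?ordSK ?ord_predK. Qed.

Lemma tgt_inl e v : (tgtf e == v) = (e \in inl v).
Proof.
case: e => i [kd Hkd]; case: v => j [r Hr].
do 10 (case: kd Hkd => [|kd] Hkd; [
  do 6 (case: r Hr => [|r] Hr; [ rewrite /inl /tgtf /= !inE !xpair_eqE /= ?andbT ?andbF ?orbF ?ordS_eq // | ]); by [] | ]).
by [].
Qed.
Lemma src_outl e v : (srcf e == v) = (e \in outl v).
Proof.
case: e => i [kd Hkd]; case: v => j [r Hr].
do 10 (case: kd Hkd => [|kd] Hkd; [
  do 6 (case: r Hr => [|r] Hr; [ rewrite /outl /srcf /= !inE !xpair_eqE /= ?andbT ?andbF ?orbF ?ordS_eq // | ]); by [] | ]).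
by [].
Qed.

Lemma uniq_inl v : uniq (inl v).
Proof.
case: v => j [r Hr].
do 6 (case: r Hr => [|r] Hr; [ by rewrite /inl /= ?inE ?xpair_eqE /= ?andbT ?andbF ?orbF | ]); by [].
Qed.

Lemma uniq_outl v : uniq (outl v).
Proof.
case: v => j [r Hr].
do 6 (case: r Hr => [|r] Hr; [ by rewrite /outl /= ?inE ?xpair_eqE /= ?andbT ?andbF ?orbF | ]); by [].
Qed.

Lemma sum_in (F : A -> nat) v : \sum_(e | tgtf e == v) F e = \sum_(e <- inl v) F e.
Proof. by rewrite big_uniq ?uniq_inl //; apply: eq_bigl => e; rewrite tgt_inl. Qed.

Lemma sum_out (F : A -> nat) v : \sum_(e | srcf e == v) F e = \sum_(e <- outl v) F e.
Proof. by rewrite big_uniq ?uniq_outl //; apply: eq_bigl => e; rewrite src_outl. Qed.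

Lemma card_in v : #|[set e : A | tgtf e == v]| <= size (inl v).
Proof. by rewrite (@eq_card _ _ (mem (inl v))) ?card_size // => e; rewrite inE tgt_inl. Qed.

Lemma card_out v : #|[set e : A | srcf e == v]| <= size (outl v).
Proof. by rewrite (@eq_card _ _ (mem (outl v))) ?card_size // => e; rewrite inE src_outl. Qed.

Lemma val_ordS (i : 'I_n.+1) : val (ordS i) = if val i == n then 0 else (val i).+1.
Proof.
rewrite /ordS /=; case: eqP => [->|H]; first by rewrite modnn.
by rewrite modn_small //; have := ltn_ord i; lia.
Qed.

Lemma val_ord_pred (i : 'I_n.+1) : val (ord_pred i) = if val i == 0 then n else (val i).-1.
Proof.
rewrite /ord_pred /=; case: eqP => [->|H]; first by rewrite add0n /= modn_small.
have Hi := ltn_ord i.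
have -> : (i + n.+1).-1 = (i.-1) + n.+1 by lia.
by rewrite modnDr modn_small //; lia.
Qed.

Lemma predmod (j : nat) : j < n.+1 -> (j + n.+1).-1 %% n.+1 = if j == 0 then n else j.-1.
Proof.
move=> Hi; case: eqP => [->|H]; first by rewrite add0n /= modn_small.
have -> : (j + n.+1).-1 = (j.-1) + n.+1 by lia.
by rewrite modnDr modn_small //; lia.
Qed.

Lemma succmod (j : nat) : j < n.+1 -> j.+1 %% n.+1 = if j == n then 0 else j.+1.
Proof.
move=> Hi; case: eqP => [->|H]; first by rewrite modnn.
by rewrite modn_small //; lia.
Qed.

Definition lab (a t : nat) (e : A) : nat :=
  let i := val e.1 in let last := (i == n) in
  match val e.2 with
  | 0 | 3 | 6 => a
  | 1 | 7 => a - (t - i)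
  | 2 | 5 => if last then t - n else 1
  | 4 => a - (if last then t - n else 1)
  | _ => if last then 0 else t - i.+1 end.

End G.

Definition G n := Digraph (@srcf n) (@tgtf n).

Lemma indeg_le n (v : dvert (G n)) : indeg v <= size (inl v).
Proof. exact: card_in. Qed.
Lemma outdeg_le n (v : dvert (G n)) : outdeg v <= size (outl v).
Proof. exact: card_out. Qed.

Theorem lemma4p5 (a k : nat) (ha : 1 <= a) (hk : 1 <= k) (hka : k <= a) :
  exists (H : digraph) (p q : dvert H),
    loopless H /\ deg_le4 p q /\
    forall t : nat, (k <= t <= a) <-> exists f : darc H -> nat, good_labelling p q a t f.
Proof.
case: k hk hka => [//|n] _ hka.
exists (G n), (ord0, R0), (ord0, R5).
split; [|split].
- move=> [i [kd Hkd]].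
  do 10 (case: kd Hkd => [|kd] Hkd; [ by rewrite /= xpair_eqE /= ?andbF | ]); by [].
- move=> [j [r Hr]].
  have H1 := indeg_le (j, Ordinal Hr); have H2 := outdeg_le (j, Ordinal Hr).
  move: H1 H2.
  do 6 (case: r Hr => [|r] Hr; [ rewrite /= !xpair_eqE /= ?andbF ?andbT; case: (j == ord0); simpl; lia | ]); by [].
- move=> t; split.
  + case/andP=> Hkt Hta; exists (lab a t); split; [|split].
    * move=> [j [r Hr]]; rewrite /in_sum /= sum_in.
      have Hj := ltn_ord j.
      do 6 (case: r Hr => [|r] Hr; [ rewrite /= !big_cons big_nil /lab /= ?xpair_eqE ?ordE /= ?andbT ?andbF ?predmod ?succmod //;
        repeat (case: eqP => ?); lia | ]); by [].
    * move=> [j [r Hr]]; rewrite /out_sum /= sum_out.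
      have Hj := ltn_ord j.
      do 6 (case: r Hr => [|r] Hr; [ rewrite /= !big_cons big_nil /lab /= ?xpair_eqE ?ordE /= ?andbT ?andbF ?predmod ?succmod //;
        repeat (case: eqP => ?); lia | ]); by [].
    * pose P := pos_adj (lab a t : darc (G n) -> nat).
      have adj : forall e : 'I_n.+1 * 'I_10, 0 < lab a t e -> P (tgtf e) (srcf e).
        by move=> e He; apply/existsP; exists e; rewrite He /= !eqxx orbT.
      have step : forall x y, P x y -> connect P y (ord0, R0) -> connect P x (ord0, R0).
        by move=> x y H; apply: connect_trans; exact: connect1.
      have Hc : forall j : 'I_n.+1, connect P (j, R0) (ord0, R0).
        case=> m; elim: m => [|m IH] Hm.
          by have -> : (Ordinal Hm, R0) = (ord0, R0) by apply/eqP; rewrite xpair_eqE ordE.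
        have Hm' : m < n.+1 by lia.
        apply: (step _ (Ordinal Hm', R1)).
          have := adj (Ordinal Hm', K8); rewrite /lab /tgtf /srcf /=.
          have -> : ordS (Ordinal Hm') = Ordinal Hm by apply/val_inj; rewrite /= succmod //; case: eqP => //; lia.
          by apply; case: eqP => //; lia.
        apply: (step _ (Ordinal Hm', R0)); last exact: IH.
        by have := adj (Ordinal Hm', K0); rewrite /lab /tgtf /srcf /=; apply.
      have Hc1 : forall j : 'I_n.+1, connect P (j, R1) (ord0, R0).
        move=> j; apply: (step _ (j, R0)); last exact: Hc.
        by have := adj (j, K0); rewrite /lab /tgtf /srcf /=; apply.
      have Hc2 : forall j : 'I_n.+1, connect P (j, R2) (ord0, R0).
        move=> j; apply: (step _ (j, R1)); last exact: Hc1.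
        by have := adj (j, K2); rewrite /lab /tgtf /srcf /=; apply; case: eqP => //; lia.
      have Hc3 : forall j : 'I_n.+1, connect P (j, R3) (ord0, R0).
        move=> j; apply: (step _ (j, R2)); last exact: Hc2.
        by have := adj (j, K3); rewrite /lab /tgtf /srcf /=; apply.
      have Hc4 : forall j : 'I_n.+1, connect P (j, R4) (ord0, R0).
        move=> j; apply: (step _ (j, R3)); last exact: Hc3.
        by have := adj (j, K5); rewrite /lab /tgtf /srcf /=; apply; case: eqP => //; lia.
      have Hc5 : forall j : 'I_n.+1, connect P (j, R5) (ord0, R0).
        move=> j; apply: (step _ (j, R4)); last exact: Hc4.
        by have := adj (j, K6); rewrite /lab /tgtf /srcf /=; apply.
      move=> [j [r Hr]].
      do 6 (case: r Hr => [|r] Hr; [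
        first [ (have -> : Ordinal Hr = R0 by apply: val_inj); exact: Hc
              | (have -> : Ordinal Hr = R1 by apply: val_inj); exact: Hc1
              | (have -> : Ordinal Hr = R2 by apply: val_inj); exact: Hc2
              | (have -> : Ordinal Hr = R3 by apply: val_inj); exact: Hc3
              | (have -> : Ordinal Hr = R4 by apply: val_inj); exact: Hc4
              | (have -> : Ordinal Hr = R5 by apply: val_inj); exact: Hc5 ] | ]).
      by [].
  + case=> f [Hin [Hout Hcon]].
    have Hta : t <= a by have := Hin (ord0, R0); rewrite /in_sum eqxx => <-; exact: leq_addr.
    have Hpos : forall i : 'I_n.+1, 0 < f (i, K5).
      move=> i; rewrite lt0n; apply/negP => /eqP H5.
      have H2 : f (i, K2) = 0.
        have := Hin (i, R2); have := Hout (i, R3).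
        rewrite /in_sum /out_sum /= sum_in sum_out /= !big_cons !big_nil /= ?xpair_eqE /= ?andbF.
        lia.
      have Hz : forall kd : 'I_10, (val kd == 2) || (val kd == 5) -> f (i, kd) = 0.
        move=> [kd Hkd] /= /orP [/eqP E | /eqP E]; subst kd;
          [transitivity (f (i, K2)) | transitivity (f (i, K5))] => //;
          congr (f (_, _)); exact: val_inj.
      pose X := [pred v : 'I_n.+1 * 'I_6 | (v.1 == i) && ((val v.2 == 2) || (val v.2 == 3))].
      have cl : closed (pos_adj f) X.
        move=> x y /existsP [e /andP [He Hxy]].
        have key : (srcf e \in X) = (tgtf e \in X).
          move: He; clear Hxy; case: e => i' [kd Hkd].
          do 10 (case: kd Hkd => [|kd] Hkd; [ rewrite /srcf /tgtf /= ?inE /= ?andbF ?andbT //;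
            try (move=> He; case: eqP He => // -> He; by rewrite Hz in He) | ]); by [].
        by case/orP: Hxy => /andP [/eqP <- /eqP <-].
      have := closed_connect cl (Hcon (i, R2)).
      by rewrite !inE /= eqxx /= andbF.
    pose S := [pred v : 'I_n.+1 * 'I_6 | val v.2 < 4].
    have C := @cut_lemma (G n) _ _ _ _ _ S Hin Hout.
    have E1 : \sum_(e : darc (G n) | (dtgt e \in S) && (dsrc e \notin S)) f e = 0.
      apply: big1 => -[i' [kd Hkd]].
      by do 10 (case: kd Hkd => [|kd] Hkd; [ rewrite /= ?inE /= ?andbF ?andbT // | ]).
    have E2 : \sum_(e : darc (G n) | (dsrc e \in S) && (dtgt e \notin S)) f e = \sum_(i < n.+1) f (i, K5).
      transitivity (\sum_(p : 'I_n.+1 * 'I_10 | true && (p.2 == K5)) f (p.1, p.2)).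
        apply: eq_big => [[i' [kd Hkd]]|[i' kd] _] //=.
        by do 10 (case: kd Hkd => [|kd] Hkd; [ rewrite /= ?inE /= ?andbF ?andbT // | ]).
      rewrite -(pair_big xpredT (pred1 K5) (fun i k => f (i, k))) /=.
      by apply: eq_bigr => i _; exact: big_pred1_eq.
    rewrite E1 E2 /= in C.
    have : \sum_(i < n.+1) 1 <= \sum_(i < n.+1) f (i, K5) by apply: leq_sum => i _; exact: Hpos.
    rewrite sum1_card card_ord => Hs.
    apply/andP; split => //; rewrite mul1n addn0 mul0n add0n in C; by rewrite C.
Qed.
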